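(* Let $n\ge 2$ and let $B$ be an $n\times n$ agreement matrix. If $H(X_B^+)=0$ and $B$ has exactly $m$ non-null rows, then $IA_\epsilon(B)$ exists and equals $(n-m)/n$.
   Context: An $n\times n$ agreement matrix $B$ has nonnegative entries $B[y][x]$ (row $y$, column $x$), not all zero. A row (column) is non-null if not all of its entries are $0$. For any $n\times n$ matrix $M$ with nonnegative real entries not all zero, let $S_M=\sum_{y,x}M[y][x]$ and define random variables $X_M$ on $\{1,\dots,n\}$ with $P(X_M=x)=\sum_yM[y][x]/S_M$, $Y_M$ with $P(Y_M=y)=\sum_xM[y][x]/S_M$, and the joint variable $X_MY_M$ with $P(X_MY_M=(y,x))=M[y][x]/S_M$. $H$ is Shannon entropy in base 2, defined only when all probabilities are positive. The information agreement is $IA(M)=\frac{H(X_M)+H(Y_M)-H(X_MY_M)}{\min\{H(X_M),H(Y_M)\}}$. For $\epsilon>0$, the $0$-freed matrix $B_\epsilon$ is obtained from $B$ by replacing every zero entry by $\epsilon$, and $IA_\epsilon(B)=\lim_{\epsilon\to0^+}IA(B_\epsilon)$. For a random variable $Z$, the refined variable $Z^+$ is $Z$ restricted to values of positive probability, with $H(Z^+)=-\sum_{z:\,p_Z(z)>0}p_Z(z)\log_2p_Z(z)$. *)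

(* Defs.v *)
From HB Require Import structures.
From mathcomp Require Import all_boot all_order all_algebra.
From mathcomp Require Import all_classical all_reals all_analysis.
Set Implicit Arguments. Unset Strict Implicit. Unset Printing Implicit Defensive.
Import Order.TTheory GRing.Theory Num.Theory.
Local Open Scope ring_scope.

Section Agreement.
Variables (R : realType) (n : nat).

Definition log2 (x : R) : R := ln x / ln 2.

(* When all probabilities are positive this
   is the usual H; in general it is H(Z^+) (the refined variable). *)
Definition entropy (I : finType) (p : I -> R) : R :=
  - \sum_(i | 0 < p i) p i * log2 (p i).

Definition Ssum (M : 'M[R]_n) : R := \sum_(y < n) \sum_(x < n) M y x.

Definition pX (M : 'M[R]_n) (x : 'I_n) : R := (\sum_(y < n) M y x) / Ssum M.
Definition pY (M : 'M[R]_n) (y : 'I_n) : R := (\sum_(x < n) M y x) / Ssum M.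
Definition pXY (M : 'M[R]_n) (yx : 'I_n * 'I_n) : R := M yx.1 yx.2 / Ssum M.

Definition HX (M : 'M[R]_n) : R := entropy (pX M).
Definition HY (M : 'M[R]_n) : R := entropy (pY M).
Definition HXY (M : 'M[R]_n) : R := entropy (pXY M).

Definition IA (M : 'M[R]_n) : R :=
  (HX M + HY M - HXY M) / Num.min (HX M) (HY M).

Definition zero_freed (B : 'M[R]_n) (eps : R) : 'M[R]_n :=
  \matrix_(y, x) (if B y x == 0 then eps else B y x).

Definition agreement_matrix (B : 'M[R]_n) : Prop :=
  (forall y x, 0 <= B y x) /\ (exists y x, B y x != 0).

Definition non_null_rows (B : 'M[R]_n) : nat :=
  #|[set y : 'I_n | [exists x, B y x != 0]]|.

End Agreement.

(* Main.v *)
Require Import Defs.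
From HB Require Import structures.
From mathcomp Require Import all_boot all_order all_algebra.
From mathcomp Require Import all_classical all_reals all_analysis.
From mathcomp Require Import ring lra.
Set Implicit Arguments. Unset Strict Implicit. Unset Printing Implicit Defensive.
Import Order.TTheory GRing.Theory Num.Theory.
Import numFieldNormedType.Exports.
Local Open Scope ring_scope.
Local Open Scope classical_set_scope.
Definition xlnx {R : realType} (x : R) := x * ln x.

Section Gen.
Variable R : realType.


Lemma small_inv_ln (C eta : R) : 0 <= C -> 0 < eta ->
  \forall e \near (0:R)^'+, C / (- ln e) < eta /\ 0 < - ln e.
Proof.
move=> C0 eta0.
have M0 : 0 < C / eta + 1 by rewrite ltr_wpDl // divr_ge0 // ltW.
near=> e.
have e0 : 0 < e by near: e; exact: nbhs_right_gt.
have eM : e < expR (- (C / eta + 1)).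
  by near: e; apply: nbhs_right_lt; rewrite expR_gt0.
have lnM : C / eta + 1 < - ln e.
  rewrite ltrNr -(expRK (- _)) ltr_ln // ?posrE ?expR_gt0 //.
have lg0 : 0 < - ln e by apply: lt_trans lnM.
split => //.
rewrite ltr_pdivrMr //.
apply: (@lt_le_trans _ _ (eta * (C / eta + 1))).
  by rewrite mulrDr mulr1 mulrCA divff ?gt_eqF // mulr1 ltrDl.
by rewrite ler_pM2l // ltW.
Unshelve. all: by end_near. Qed.

Lemma ratio_small (r : R -> R) (C : R) : 0 <= C ->
  (forall e, 0 < e <= 1 -> `|r e| <= C * e) ->
  r e / (- (e * ln e)) @[e --> (0:R)^'+] --> 0.
Proof.
move=> C0 hr; apply/cvgr0Pnorm_lt => eta eta0.
near=> e.
have e0 : 0 < e by near: e; exact: nbhs_right_gt.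
have e1 : e <= 1 by near: e; apply: nbhs_right_ltW; exact: ltr01.
have [Cl lg0] : C / (- ln e) < eta /\ 0 < - ln e.
  by near: e; exact: (@small_inv_ln C eta C0 eta0).
have g0 : 0 < - (e * ln e) by rewrite -mulrN mulr_gt0.
rewrite normrM normfV (gtr0_norm g0).
apply: le_lt_trans Cl.
rewrite ler_pdivrMr // -mulrN mulrCA divfK ?gt_eqF // mulrC.
by apply: hr; rewrite e0 e1.
Unshelve. all: by end_near. Qed.

Lemma lim_ratio (r1 r2 : R -> R) (a b C : R) : 0 <= C -> 0 < b ->
  (forall e, 0 < e <= 1 -> `|r1 e| <= C * e) ->
  (forall e, 0 < e <= 1 -> `|r2 e| <= C * e) ->
  (r1 e + a * (- (e * ln e))) / (r2 e + b * (- (e * ln e))) @[e --> (0:R)^'+]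
   --> a / b.
Proof.
move=> C0 b0 h1 h2.
have u0 := @ratio_small r1 C C0 h1.
have v0 := @ratio_small r2 C C0 h2.
have H : (fun e => (r1 e / (- (e * ln e)) + a) * (r2 e / (- (e * ln e)) + b)^-1)
    @ (0:R)^'+ --> (0 + a) * (0 + b)^-1.
  apply: cvgM; first by apply: cvgD => //; exact: cvg_cst.
  apply: cvgV; first by rewrite add0r gt_eqF.
  by apply: cvgD => //; exact: cvg_cst.
rewrite !add0r in H.
apply: cvg_trans H.
apply: near_eq_cvg; near=> e.
have e0 : 0 < e by near: e; exact: nbhs_right_gt.
have e1 : e < 1 by near: e; apply: nbhs_right_lt; exact: ltr01.
have g0 : 0 < - (e * ln e) by rewrite -mulrN mulr_gt0 // oppr_gt0 ln_lt0 // e0.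
rewrite /=.
set g := - (e * ln e).
have gn : g != 0 by rewrite gt_eqF.
have E1 : forall x y, x / g + y = (x + y * g) / g.
  by move=> x y; rewrite mulrDl mulfK.
by rewrite !E1 invf_div mulrA divfK.
Unshelve. all: by end_near. Qed.



Lemma ln_diff (c v : R) : 0 < c -> c <= v -> 0 <= ln v - ln c <= (v - c) / c.
Proof.
move=> c0 cv; have v0 : 0 < v by apply: lt_le_trans cv.
rewrite -ln_div ?posrE //; apply/andP; split.
  by apply: ln_ge0; rewrite ler_pdivlMr // mul1r.
have -> : v / c = 1 + (v - c) / c by field; rewrite gt_eqF.
apply: le_ln1Dx.
apply: (@lt_le_trans _ _ 0); first by rewrite ltrN10.
by apply: divr_ge0; rewrite ?subr_ge0 // ltW.
Qed.

Lemma lipf (c d e : R) : 0 < c -> 0 <= d -> 0 < e <= 1 ->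
  `|xlnx (c + d * e) - xlnx c| <= e * (d * (`|ln c| + d / c + 1)).
Proof.
move=> c0 d0 /andP[e0 e1].
set v := c + d * e.
have de0 : 0 <= d * e by rewrite mulr_ge0 // ltW.
have cv : c <= v by rewrite lerDl.
have /andP[l0 l1] := ln_diff c0 cv.
have vc : v - c = d * e by rewrite /v addrAC subrr add0r.
have E : xlnx v - xlnx c = (v - c) * ln v + c * (ln v - ln c) by rewrite /xlnx; ring.
rewrite E.
have hc : 0 <= c * (ln v - ln c) <= v - c.
  apply/andP; split; first by rewrite mulr_ge0 // ltW.
  by rewrite -ler_pdivlMl // mulrC.
have lnv : `|ln v| <= `|ln c| + d / c.
  have -> : ln v = ln c + (ln v - ln c) by ring.
  apply: le_trans (ler_normD _ _) _.
  rewrite lerD2l ger0_norm //.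
  apply: le_trans l1 _; rewrite vc ler_pM2r ?invr_gt0 //.
  by rewrite -[X in _ <= X]mulr1 ler_wpM2l.
apply: le_trans (ler_normD _ _) _.
rewrite normrM vc (ger0_norm de0).
have /andP[h1 h2] := hc.
rewrite (ger0_norm h1).
rewrite -vc.
have : (v - c) * `|ln v| <= (v - c) * (`|ln c| + d / c).
  by rewrite ler_wpM2l // vc.
rewrite vc => H.
have : c * (ln v - ln c) <= d * e by rewrite -vc.
move=> H2.
have -> : e * (d * (`|ln c| + d / c + 1)) = d * e * (`|ln c| + d / c) + d * e by ring.
by apply: lerD.
Qed.
Lemma ent_formula (I : finType) (a : I -> R) (S : R) : (forall i, 0 < a i) ->
  0 < S -> \sum_i a i = S ->
  entropy (fun i => a i / S) = (xlnx S - \sum_i xlnx (a i)) / (S * ln 2).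
Proof.
move=> a0 S0 sa.
have l2 : 0 < ln (2:R) by rewrite ln_gt0 // ltr1n.
rewrite /entropy (eq_bigl xpredT) => [|i]; last by rewrite divr_gt0.
rewrite (eq_bigr (fun i => (xlnx (a i) - a i * ln S) / (S * ln 2))) => [|i _]; last first.
  rewrite /log2 ln_div ?posrE // /xlnx; field.
  by rewrite !gt_eqF.
rewrite -mulr_suml sumrB -mulr_suml sa /xlnx.
by rewrite -mulNr opprB.
Qed.


Lemma one_column n (B : 'M[R]_n) : agreement_matrix B -> entropy (pX B) = 0 ->
  exists x0, forall y x, x != x0 -> B y x = 0.
Proof.
move=> [B0 [y1 [x1 Bnz]]] hent.
set c := fun x => \sum_(y < n) B y x.
have c0 x : 0 <= c x by apply: sumr_ge0 => y _.
have SBE : Ssum B = \sum_x c x by rewrite /Ssum exchange_big.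
have cpos : 0 < c x1.
  rewrite lt0r; apply/andP; split => //.
  apply/eqP => /(psumr_eq0P (fun y _ => B0 y x1)) /(_ y1 isT) /eqP.
  by rewrite (negbTE Bnz).
have SB0 : 0 < Ssum B.
  rewrite SBE (bigD1 x1) //= ltr_pwDl //; exact: sumr_ge0.
have pE x : pX B x = c x / Ssum B by [].
have p0 x : 0 <= pX B x by rewrite pE divr_ge0 // ltW.
have p1 : \sum_x pX B x = 1.
  by rewrite (eq_bigr _ (fun x _ => pE x)) -mulr_suml -SBE divff // gt_eqF.
have ple1 x : pX B x <= 1.
  rewrite -p1 (bigD1 x) //= lerDl; exact: sumr_ge0.
have l2 : 0 < ln (2:R) by rewrite ln_gt0 // ltr1n.
have Hz : forall x, 0 < pX B x -> - (pX B x * log2 (pX B x)) = 0.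
  move=> x px.
  apply: (@psumr_eq0P _ _ (fun x => 0 < pX B x) (fun x => - (pX B x * log2 (pX B x)))) => //.
    move=> z pz; rewrite oppr_ge0 /log2 mulr_ge0_le0 //.
    by rewrite pmulr_lle0 ?invr_gt0 // ln_le0.
  by rewrite sumrN; exact: hent.
have pone x : 0 < pX B x -> pX B x = 1.
  move=> px; move: (Hz x px) => /eqP; rewrite oppr_eq0 mulf_eq0 (gt_eqF px) /=.
  rewrite /log2 mulf_eq0 invr_eq0 (gt_eqF l2) orbF ln_eq0 //.
  by move/eqP.
have [x0 px0] : exists x0, 0 < pX B x0.
  exists x1; rewrite pE divr_gt0 //.
exists x0 => y x xx0.
have rest : \sum_(x | x != x0) pX B x = 0.
  by move: p1; rewrite (bigD1 x0) //= pone // => /(congr1 (fun t => t - 1)); rewrite addrC addrK subrr.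
have px : pX B x = 0 by apply: (psumr_eq0P (fun i _ => p0 i) rest).
have : c x = 0.
  by move: px; rewrite pE => /eqP; rewrite mulf_eq0 invr_eq0 (gt_eqF SB0) orbF => /eqP.
by move/(psumr_eq0P (fun y _ => B0 y x)); apply.
Qed.

Lemma g_bound (t e : R) : 0 < t -> 0 < e -> - (e * ln e) <= t + e * `|ln t|.
Proof.
move=> t0 e0.
have := ln_sublinear (divr_gt0 t0 e0).
rewrite ln_div ?posrE // => H.
have H2 : e * (ln t - ln e) < t.
  by move: H; rewrite -(ltr_pM2l e0) mulrCA divff ?gt_eqF // mulr1.
have H3 : - (e * ln t) <= e * `|ln t|.
  rewrite -mulrN; apply: ler_wpM2l; first exact: ltW.
  by rewrite -normrN; exact: ler_norm.
move: H2; rewrite mulrBr => H2.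
have : - (e * ln e) <= t - e * ln t by apply: ltW; rewrite -subr_gt0; move: H2; rewrite -subr_gt0; congr (0 < _); ring.
move=> H4; apply: le_trans H4 _; by rewrite lerD2l.
Qed.

Lemma norm3 (a b c : R) : `|a - b - c| <= `|a| + `|b| + `|c|.
Proof.
apply: le_trans (ler_normB _ _) _; rewrite lerD2r.
exact: ler_normB.
Qed.

Lemma nle (x : R) : - `|x| <= x.
Proof. by rewrite lerNl -normrN; exact: ler_norm. Qed.
End Gen.

Section Gen2.
Variable R : realType.

Lemma eventually_pos (D0 C2 Q : R) (err : R -> R) : 0 < D0 -> 0 <= C2 -> 0 <= Q ->
  (forall e, 0 < e <= 1 -> `|err e| <= C2 * e + Q * (- (e * ln e))) ->
  \forall e \near (0:R)^'+, 0 <= D0 + err e.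
Proof.
move=> D00 C20 Q0 herr.
set t := D0 / (2 * (Q + 1)).
have t0 : 0 < t by rewrite divr_gt0 // mulr_gt0 // ltr_wpDl.
have Qt : Q * t <= D0 / 2.
  have Q1 : Q + 1 != 0 by rewrite gt_eqF // ltr_wpDl.
  have -> : Q * t = D0 / 2 * (Q / (Q + 1)) by rewrite /t; field.
  apply: ler_piMr; first by rewrite divr_ge0 // ltW.
  by rewrite ler_pdivrMr ?ltr_wpDl // mul1r lerDl.
set W := C2 + Q * `|ln t|.
have W0 : 0 <= W by rewrite addr_ge0 // mulr_ge0.
near=> e.
have e0 : 0 < e by near: e; exact: nbhs_right_gt.
have e1 : e <= 1 by near: e; apply: nbhs_right_ltW; exact: ltr01.
have eW : e * W <= D0 / 2.
  have : e < D0 / (2 * (W + 1)).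
    near: e; apply: nbhs_right_lt; by rewrite divr_gt0 // mulr_gt0 // ltr_wpDl.
  rewrite ltr_pdivlMr ?mulr_gt0 ?ltr_wpDl // => H.
  have : e * W * 2 <= D0.
    apply: le_trans (ltW H); rewrite -mulrA; apply: ler_wpM2l; [exact: ltW|]; rewrite mulrC ler_pM2l // lerDl ler01 //.
  by move=> h2; rewrite ler_pdivlMr.
have hg := g_bound t0 e0.
have he := herr e (introT andP (conj e0 e1)).
have := nle (err e).
have hQ : Q * (- (e * ln e)) <= Q * t + e * (Q * `|ln t|).
  by have := ler_wpM2l Q0 hg; rewrite mulrDr [e * (Q * _)]mulrCA.
move: eW; rewrite /W mulrDr => eW.
have D2 : D0 / 2 + D0 / 2 = D0 by field.
move=> H; lra.
Unshelve. all: by end_near. Qed.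
Lemma eqle (x y : R) : x = y -> x <= y.
Proof. by move->. Qed.
End Gen2.
Section Main.
Variables (R : realType) (n : nat) (B : 'M[R]_n) (x0 : 'I_n).
Hypothesis B0 : forall y x, 0 <= B y x.
Hypothesis hx0 : forall y x, x != x0 -> B y x = 0.
Let b y := B y x0.
Let k := #|[pred y | b y == 0]|.
Let s := \sum_(y | b y != 0) b y.

Lemma splitZ (F : R -> R) eps :
  \sum_y F (if b y == 0 then eps else b y) = F eps *+ k + \sum_(y | b y != 0) F (b y).
Proof.
rewrite (bigID (fun y => b y == 0)) /=; congr (_ + _).
  rewrite (eq_bigr (fun _ => F eps)) => [|y ->//].
  by rewrite sumr_const.
by apply: eq_bigr => y /negbTE ->.
Qed.

Lemma s_all : \sum_y b y = s.
Proof.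
rewrite (bigID (fun y => b y == 0)) /= big1 ?add0r // => y /eqP //.
Qed.

Section Eps.
Variable e : R.
Hypothesis e0 : 0 < e.
Let M := zero_freed B e.

Lemma Mx y x : x != x0 -> M y x = e.
Proof. by move=> h; rewrite /M /zero_freed mxE hx0 // eqxx. Qed.

Lemma Mx0 y : M y x0 = if b y == 0 then e else b y.
Proof. by rewrite /M /zero_freed mxE. Qed.

Lemma Mpos y x : 0 < M y x.
Proof.
rewrite /M /zero_freed mxE; case: ifP => // /negbT h.
by rewrite lt0r h B0.
Qed.

Let c0 := s + k%:R * e.
Lemma col0 : \sum_y M y x0 = c0.
Proof.
rewrite (eq_bigr _ (fun y _ => Mx0 y)) (splitZ id) /c0 addrC mulr_natl.
by [].
Qed.

Lemma colx x : x != x0 -> \sum_y M y x = n%:R * e.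
Proof.
move=> h; rewrite (eq_bigr _ (fun y _ => Mx y h)) sumr_const card_ord.
by rewrite mulr_natl.
Qed.

Lemma roweq y : \sum_x M y x = M y x0 + (n.-1)%:R * e.
Proof.
rewrite (bigD1 x0) //=; congr (_ + _).
rewrite (eq_bigr (fun _ => e)) => [|x]; last exact: Mx.
by rewrite sumr_const cardC1 card_ord mulr_natl.
Qed.

Let S := c0 + (n * n.-1)%:R * e.
Lemma Ssum_eq : Ssum M = S.
Proof.
rewrite /Ssum (eq_bigr _ (fun y _ => roweq y)) big_split /= col0 sumr_const card_ord.
by rewrite /S natrM; ring.
Qed.

Lemma n0 : (0 < n)%N.
Proof. exact: (leq_ltn_trans (leq0n _) (ltn_ord x0)). Qed.

Lemma colpos x : 0 < \sum_y M y x.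
Proof.
rewrite (bigD1 x0) //= ltr_pwDl ?Mpos //.
by apply: sumr_ge0 => y _; apply: ltW; apply: Mpos.
Qed.

Lemma rowpos y : 0 < \sum_x M y x.
Proof.
rewrite (bigD1 x0) //= ltr_pwDl ?Mpos //.
by apply: sumr_ge0 => x _; apply: ltW; apply: Mpos.
Qed.

Lemma Spos : 0 < S.
Proof.
rewrite -Ssum_eq /Ssum (bigD1 x0) //= ltr_pwDl ?rowpos //.
by apply: sumr_ge0 => y _; apply: ltW; apply: rowpos.
Qed.

Lemma nE : n%:R = n.-1%:R + 1 :> R.
Proof. by rewrite natr1 prednK // n0. Qed.

Lemma HX_eq : HX M = (xlnx S - (xlnx c0 + n.-1%:R * xlnx (n%:R * e))) / (S * ln 2).
Proof.
rewrite /HX /pX Ssum_eq (@ent_formula _ _ (fun x => \sum_y M y x)) ?Spos //; last first.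
  by rewrite -Ssum_eq /Ssum exchange_big.
  exact: colpos.
congr ((_ - _) / _).
rewrite (bigD1 x0) //= col0; congr (_ + _).
rewrite (eq_bigr (fun _ => xlnx (n%:R * e))) => [|x hx]; last by rewrite colx.
by rewrite sumr_const cardC1 card_ord [RHS]mulr_natl.
Qed.

Lemma HY_eq : HY M = (xlnx S - (xlnx (n%:R * e) *+ k +
   \sum_(y | b y != 0) xlnx (b y + n.-1%:R * e))) / (S * ln 2).
Proof.
rewrite /HY /pY Ssum_eq (@ent_formula _ _ (fun y => \sum_x M y x)) ?Spos //; last first.
  by rewrite -Ssum_eq /Ssum.
  exact: rowpos.
congr ((_ - _) / _).
rewrite (eq_bigr (fun y => (fun t => xlnx (t + n.-1%:R * e)) (if b y == 0 then e else b y)))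
  => [|y _]; last by rewrite roweq Mx0.
by rewrite (splitZ (fun t => xlnx (t + n.-1%:R * e))) nE; congr (xlnx _ *+ _ + _); ring.
Qed.

Lemma HXY_eq : HXY M = (xlnx S - (xlnx e *+ k + \sum_(y | b y != 0) xlnx (b y)
   + (n * n.-1)%:R * xlnx e)) / (S * ln 2).
Proof.
rewrite /HXY /pXY Ssum_eq (@ent_formula _ _ (fun yx => M yx.1 yx.2)) ?Spos //; last first.
  by rewrite -Ssum_eq /Ssum pair_bigA.
  by move=> [y x]; exact: Mpos.
congr ((_ - _) / _).
rewrite -(pair_bigA _ (fun y x => xlnx (M y x))) /=.
rewrite (eq_bigr (fun y => xlnx (M y x0) + n.-1%:R * xlnx e)) => [|y _]; last first.
  rewrite (bigD1 x0) //=; congr (_ + _).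
  rewrite (eq_bigr (fun _ => xlnx e)) => [|x hx]; last by rewrite Mx.
  by rewrite sumr_const cardC1 card_ord mulr_natl.
rewrite big_split /= (eq_bigr (fun y => xlnx (if b y == 0 then e else b y))) => [|y _]; last by rewrite Mx0.
rewrite splitZ sumr_const card_ord natrM.
ring.
Qed.

End Eps.

Hypothesis hP : exists y, b y != 0.

Let K : R := k%:R.
Let d1 : R := K + (n * n.-1)%:R.
Let g (e : R) := - (e * ln e).
Let rX (e : R) := xlnx (s + d1 * e) - xlnx (s + K * e) - n.-1%:R * (n%:R * e * ln n%:R).
Let rN (e : R) := rX e + (xlnx (s + d1 * e) - \sum_(y | b y != 0) xlnx (b y + n.-1%:R * e)
   - K * (n%:R * e * ln n%:R)) - (xlnx (s + d1 * e) - \sum_(y | b y != 0) xlnx (b y)).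

Lemma bpos y : b y != 0 -> 0 < b y.
Proof. by move=> h; rewrite lt0r h B0. Qed.

Lemma spos : 0 < s.
Proof.
have [y hy] := hP.
rewrite /s (bigD1 y) //= ltr_pwDl ?bpos //.
by apply: sumr_ge0 => z /andP[hz _]; apply: ltW; apply: bpos.
Qed.

Lemma xlnx_n e : 0 < e -> xlnx (n%:R * e) = n%:R * e * ln n%:R - n%:R * g e.
Proof.
move=> e0; rewrite /xlnx /g lnM ?posrE ?ltr0n ?n0 //; ring.
Qed.

Lemma divD_eq (a c d D : R) : D != 0 -> (a / D + c / D - d / D) / (a / D) = (a + c - d) / a.
Proof.
move=> D0; rewrite -mulrDl -mulrBl invf_div mulrA divfK //.
Qed.

Lemma Sfold e : s + k%:R * e + (n * n.-1)%:R * e = s + d1 * e.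
Proof. by rewrite /d1 /K; ring. Qed.

Lemma IA_eq e : 0 < e -> HX (zero_freed B e) <= HY (zero_freed B e) ->
  IA (zero_freed B e) = (rN e + (K * n.-1%:R) * g e) / (rX e + (n * n.-1)%:R * g e).
Proof.
move=> e0 hle; rewrite /IA (min_l hle) (HX_eq e0) (HY_eq e0) (HXY_eq e0) divD_eq; last first.
  by rewrite mulf_neq0 // gt_eqF // ?(Spos e0) // ln_gt0 // ltr1n.
rewrite !Sfold; congr (_ / _); rewrite /rN /rX !xlnx_n // /d1 /K natrM nE /g /xlnx; ring.
Qed.

Let L (c d : R) := d * (`|ln c| + d / c + 1).

Lemma L_ge0 c d : 0 < c -> 0 <= d -> 0 <= L c d.
Proof.
move=> c0 d0; rewrite /L; apply: mulr_ge0 => //; apply: addr_ge0; [apply: addr_ge0; [exact: normr_ge0| apply: divr_ge0 => //; exact: ltW] | exact: ler01].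
Qed.

Lemma K_ge0 : 0 <= K. Proof. by rewrite /K ler0n. Qed.
Lemma d1_ge0 : 0 <= d1. Proof. by rewrite /d1 addr_ge0 ?K_ge0. Qed.

Let CX := L s d1 + L s K + n.-1%:R * n%:R * `|ln n%:R|.
Let CP := \sum_(y | b y != 0) L (b y) n.-1%:R.
Let C := CX + CP + K * n%:R * `|ln n%:R|.

Lemma CP_ge0 : 0 <= CP.
Proof. by apply: sumr_ge0 => y hy; apply: L_ge0; rewrite ?bpos. Qed.

Lemma lnterm_bound (a : R) e : 0 <= a -> 0 < e ->
  `|a * (n%:R * e * ln n%:R)| <= a * n%:R * `|ln n%:R| * e.
Proof.
move=> a0 e0; rewrite !normrM (ger0_norm a0) normr_nat (gtr0_norm e0).
by rewrite le_eqVlt; apply/orP; left; apply/eqP; ring.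
Qed.

Lemma rX_bound e : 0 < e <= 1 -> `|rX e| <= CX * e.
Proof.
move=> /andP[e0 e1].
have E : rX e = (xlnx (s + d1 * e) - xlnx s) - (xlnx (s + K * e) - xlnx s)
   - n.-1%:R * (n%:R * e * ln n%:R) by rewrite /rX; ring.
have h1 : `|xlnx (s + d1 * e) - xlnx s| <= L s d1 * e.
  by rewrite [L _ _ * e]mulrC; apply: lipf; rewrite ?spos ?d1_ge0 ?e0.
have h2 : `|xlnx (s + K * e) - xlnx s| <= L s K * e.
  by rewrite [L _ _ * e]mulrC; apply: lipf; rewrite ?spos ?K_ge0 ?e0.
have h3 := @lnterm_bound n.-1%:R e (ler0n _ _) e0.
rewrite E; apply: le_trans (norm3 _ _ _) _.
apply: le_trans (lerD (lerD h1 h2) h3) _.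
by apply: eqle; rewrite /CX; ring.
Qed.

Lemma sumdiff_bound e : 0 < e <= 1 ->
  `|\sum_(y | b y != 0) (xlnx (b y + n.-1%:R * e) - xlnx (b y))| <= CP * e.
Proof.
move=> /andP[e0 e1].
apply: le_trans (ler_norm_sum _ _ _) _; rewrite /CP mulr_suml; apply: ler_sum => y hy.
by rewrite [L _ _ * e]mulrC; apply: lipf; rewrite ?bpos ?ler0n ?e0.
Qed.

Lemma rN_bound e : 0 < e <= 1 -> `|rN e| <= C * e.
Proof.
move=> he; have /andP[e0 e1] := he.
have E : rN e = rX e - \sum_(y | b y != 0) (xlnx (b y + n.-1%:R * e) - xlnx (b y))
   - K * (n%:R * e * ln n%:R) by rewrite /rN sumrB; ring.
have h3 := @lnterm_bound K e K_ge0 e0.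
rewrite E; apply: le_trans (norm3 _ _ _) _.
apply: le_trans (lerD (lerD (rX_bound he) (sumdiff_bound he)) h3) _.
by apply: eqle; rewrite /C; ring.
Qed.

Lemma rX_boundC e : 0 < e <= 1 -> `|rX e| <= C * e.
Proof.
move=> he; have /andP[e0 e1] := he.
apply: le_trans (rX_bound he) _; rewrite ler_pM2r // /C -addrA lerDl addr_ge0 ?CP_ge0 //.
by rewrite !mulr_ge0 ?K_ge0.
Qed.

Lemma kE : (k + #|[pred y | b y != 0%R]|)%N = n.
Proof.
apply: etrans (card_ord n); rewrite -(cardC [pred y | b y == 0]); congr addn.
Qed.

Lemma g_ge0 e : 0 < e <= 1 -> 0 <= g e.
Proof. by move=> /andP[e0 e1]; rewrite /g -mulrN; apply: mulr_ge0; [exact: ltW | rewrite oppr_ge0; exact: ln_le0]. Qed.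

Let AYmAX (e : R) := xlnx (s + K * e) + n.-1%:R * xlnx (n%:R * e)
  - (xlnx (n%:R * e) *+ k + \sum_(y | b y != 0) xlnx (b y + n.-1%:R * e)).

Lemma hle_of e : 0 < e -> 0 <= AYmAX e -> HX (zero_freed B e) <= HY (zero_freed B e).
Proof.
move=> e0 h; rewrite (HX_eq e0) (HY_eq e0) ler_pM2r ?invr_gt0 ?mulr_gt0 ?(Spos e0) ?ln_gt0 ?ltr1n //.
by rewrite lerD2l lerN2 -subr_ge0.
Qed.

Lemma D0pos : (1 < #|[pred y | b y != 0%R]|)%N ->
  0 < xlnx s - \sum_(y | b y != 0) xlnx (b y).
Proof.
move/card_gt1P => [y1 [y2 [h1 h2 h12]]]; rewrite !inE in h1 h2.
have bs y : b y != 0 -> b y <= s.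
  move=> hy; rewrite /s (bigD1 y) //= lerDl.
  by apply: sumr_ge0 => z /andP[hz _]; apply: ltW; apply: bpos.
have lt1 : b y1 < s.
  rewrite /s (bigD1 y1) //= (bigD1 y2) /=; last by rewrite h2 eq_sym.
  rewrite ltrDl ltr_pwDl ?bpos //.
  by apply: sumr_ge0 => z /andP[/andP[hz _] _]; apply: ltW; apply: bpos.
have -> : xlnx s = \sum_(y | b y != 0) b y * ln s by rewrite /xlnx -mulr_suml.
rewrite -sumrB (bigD1 y1) //= ltr_pwDl //.
  by rewrite /xlnx -mulrBr; apply: mulr_gt0; [exact: bpos| rewrite subr_gt0 ltr_ln ?posrE ?bpos ?spos].
apply: sumr_ge0 => z /andP[hz _]; rewrite /xlnx -mulrBr; apply: mulr_ge0.
  exact: ltW (bpos hz).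
by rewrite subr_ge0 ler_ln ?posrE ?bpos ?spos ?bs.
Qed.

Lemma hle_near : \forall e \near (0:R)^'+, HX (zero_freed B e) <= HY (zero_freed B e).
Proof.
have [m1|m2] := eqVneq #|[pred y | b y != 0]| 1%N.
  have /card1P [y0 hy0] : #|[pred y | b y != 0]| == 1%N by rewrite m1.
  have P1 : (fun y => b y != 0) =1 pred1 y0 by move=> y; have := hy0 y; rewrite !inE.
  have kn : k = n.-1 by have := kE; rewrite m1 addn1 => <-.
  near=> e.
  have e0 : 0 < e by near: e; exact: nbhs_right_gt.
  apply: hle_of => //.
  rewrite /AYmAX /s !(big_pred1 y0 P1) /K kn.
  by apply: eqle; rewrite -mulr_natl; ring.
have m2' : (1 < #|[pred y | b y != 0%R]|)%N.
  have [y hy] := hP.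
  have : (0 < #|[pred y | b y != 0%R]|)%N by apply/card_gt0P; exists y; rewrite inE.
  by case: #|_| m2 => [|[|]].
set D0 := xlnx s - \sum_(y | b y != 0) xlnx (b y).
set Q := `|n.-1%:R - K| * n%:R.
set C2 := L s K + CP + `|n.-1%:R - K| * n%:R * `|ln n%:R|.
set err := fun e => (xlnx (s + K * e) - xlnx s)
   - \sum_(y | b y != 0) (xlnx (b y + n.-1%:R * e) - xlnx (b y))
   + (n.-1%:R - K) * (n%:R * e * ln n%:R - n%:R * g e).
have C20 : 0 <= C2.
  apply: addr_ge0; first apply: addr_ge0.
  - exact: L_ge0 spos K_ge0.
  - exact: CP_ge0.
  - by apply: mulr_ge0; first apply: mulr_ge0.
have Q0 : 0 <= Q by rewrite /Q mulr_ge0.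
have herr : forall e, 0 < e <= 1 -> `|err e| <= C2 * e + Q * (- (e * ln e)).
  move=> e he; have /andP[e0 e1] := he.
  have h1 : `|xlnx (s + K * e) - xlnx s| <= L s K * e.
    by rewrite [L _ _ * e]mulrC; apply: lipf; rewrite ?spos ?K_ge0 ?e0.
  have h2 := sumdiff_bound he.
  have h3 : `|(n.-1%:R - K) * (n%:R * e * ln n%:R - n%:R * g e)|
      <= `|n.-1%:R - K| * n%:R * `|ln n%:R| * e + Q * g e.
    have hh : `|n%:R * e * ln n%:R - n%:R * g e| <= n%:R * `|ln n%:R| * e + n%:R * g e.
      apply: le_trans (ler_normB _ _) _.
      rewrite !normrM normr_nat (gtr0_norm e0) (ger0_norm (g_ge0 he)).
      by apply: eqle; ring.
    rewrite normrM; apply: le_trans (ler_wpM2l (normr_ge0 _) hh) _.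
    by apply: eqle; rewrite /Q; ring.
  have E : err e = (xlnx (s + K * e) - xlnx s)
   - \sum_(y | b y != 0) (xlnx (b y + n.-1%:R * e) - xlnx (b y))
   - (- ((n.-1%:R - K) * (n%:R * e * ln n%:R - n%:R * g e))) by rewrite /err opprK.
  rewrite E; apply: le_trans (norm3 _ _ _) _; rewrite normrN.
  apply: le_trans (lerD (lerD h1 h2) h3) _.
  by apply: eqle; rewrite /C2 /g; ring.
have ev := eventually_pos (D0pos m2') C20 Q0 herr.
near=> e.
have e0 : 0 < e by near: e; exact: nbhs_right_gt.
apply: hle_of => //.
have : 0 <= D0 + err e by near: e; exact: ev.
suff -> : AYmAX e = D0 + err e by [].
rewrite /AYmAX /D0 /err /= sumrB xlnx_n // /K; ring.
Unshelve. all: by end_near. Qed.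

Lemma lim_main (hn : (2 <= n)%N) : IA (zero_freed B e) @[e --> (0:R)^'+] --> K / n%:R.
Proof.
have hle := hle_near.
have C0 : 0 <= C.
  have := @rN_bound 1; rewrite ltr01 lexx mulr1 => /(_ isT) h.
  exact: le_trans (normr_ge0 _) h.
have n1 : (0 < n.-1)%N by rewrite -subn1 subn_gt0.
have bpos' : 0 < (n * n.-1)%:R :> R by rewrite ltr0n muln_gt0 n0 n1.
have H := @lim_ratio R rN rX (K * n.-1%:R) _ C C0 bpos' rN_bound rX_boundC.
have -> : K / n%:R = K * n.-1%:R / (n * n.-1)%:R.
  rewrite natrM; field; apply/andP; split; rewrite pnatr_eq0 -lt0n ?n0 //.
apply: cvg_trans H; apply: near_eq_cvg; near=> e.
have e0 : 0 < e by near: e; exact: nbhs_right_gt.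
have h : HX (zero_freed B e) <= HY (zero_freed B e) by near: e; exact: hle.
by rewrite IA_eq.
Unshelve. all: by end_near. Qed.

End Main.

Unset Implicit Arguments.

Theorem theorem2 (R : realType) (n : nat) (B : 'M[R]_n) (m : nat) :
  (2 <= n)%N ->
  agreement_matrix B ->
  entropy (pX B) = 0 ->
  non_null_rows B = m ->
  IA (zero_freed B e) @[e --> (0 : R)^'+] --> ((n - m)%:R / n%:R : R).
Proof.
move=> hn hag hent hm.
have [x0 hx0] := one_column hag hent.
have [B0 [y1 [x1 hnz]]] := hag.
have hP : exists y, B y x0 != 0.
  exists y1; case: (eqVneq x1 x0) => [<-//|ne].
  by rewrite hx0 ?eqxx in hnz.
have mE : m = #|[pred y | B y x0 != 0]|.
  rewrite -hm /non_null_rows; apply: eq_card => y; rewrite !inE.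
  apply/existsP/idP => [[x hx]|h]; last by exists x0.
  by case: (eqVneq x x0) => [<-//|ne]; rewrite hx0 ?eqxx in hx.
have kE' := kE B x0.
have H := lim_main B0 hx0 hP hn.
suff <- : #|[pred y | B y x0 == 0]| = (n - m)%N by [].
by rewrite mE -[n in (n - _)%N]kE' addnK.
Qed.
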